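(* Let $q > 5$ be a Sophie Germain prime with $z(2q+1) \mid \pi(q)$. Then the Legendre symbol $\left(\frac{5}{q}\right) = -1$ and $\pi(q) \mid 2(q+1)$.
   Context: A Sophie Germain prime is a prime $q$ with $2q+1$ prime. $F_n$ denotes the $n$-th Fibonacci number ($F_0=0$, $F_1=1$). For a prime $p$, $z(p)$ is the least positive integer $k$ with $p \mid F_k$. $\pi(n)$ is the Pisano period, the least period of $(F_m \bmod n)_{m\ge0}$. *)

(* Defs.v *)
From mathcomp Require Import all_boot.
From mathcomp Require Import ssralg ssrint.
Set Implicit Arguments. Unset Strict Implicit. Unset Printing Implicit Defensive.

Fixpoint fib (n : nat) : nat :=
  match n with
  | 0 => 0
  | 1 => 1
  | (m.+1 as k).+1 => fib k + fib m
  end.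

Definition sophie_germain (q : nat) : Prop := prime q /\ prime (2 * q + 1).

Definition is_rank_of_apparition (p k : nat) : Prop :=
  0 < k /\ p %| fib k /\ (forall j, 0 < j < k -> ~~ (p %| fib j)).

Definition is_fib_period_mod (n P : nat) : Prop :=
  0 < P /\ forall m, fib (m + P) = fib m %[mod n].

Definition is_pisano_period (n P : nat) : Prop :=
  is_fib_period_mod n P /\ (forall P', is_fib_period_mod n P' -> P <= P').

Definition legendre (a p : nat) : int :=
  if p %| a then 0%R
  else if [exists x : 'I_p, (x * x == a %[mod p])] then 1%R else (-1)%R.

(* Main.v *)
Require Import Defs.
From mathcomp Require Import all_boot.
From mathcomp Require Import ssralg ssrint zmodp finalg finfield.
From mathcomp Require Import ring zify.
Set Implicit Arguments. Unset Strict Implicit. Unset Printing Implicit Defensive.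

Lemma fibSS n : fib n.+2 = fib n.+1 + fib n. Proof. by []. Qed.

Definition Bs n := \sum_(i < n.+1) 'C(n, i) * (odd i * 5 ^ i./2).
Definition As n := \sum_(i < n.+1) 'C(n, i) * (~~ odd i * 5 ^ i./2).

Lemma BsS n : Bs n.+1 = As n + Bs n.
Proof.
rewrite /Bs /As big_ord_recl /= muln0 add0n.
under eq_bigr do rewrite binS mulnDl.
rewrite big_split /= addnC; congr (_ + _).
  apply: eq_bigr => i _; rewrite add0n uphalf_half.
  by case: (odd i).
rewrite [in RHS]big_ord_recl /= mul0n muln0 add0n big_ord_recr /= bin_small // mul0n addn0.
by apply: eq_bigr => i _.
Qed.

Lemma AsS n : As n.+1 = As n + 5 * Bs n.
Proof.
rewrite /Bs /As big_ord_recl /= bin0 mul1n.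
under eq_bigr do rewrite binS mulnDl.
rewrite big_split /= addnA; congr (_ + _).
  rewrite [in RHS]big_ord_recl /= bin0 [in LHS]big_ord_recr /= bin_small // mul0n addn0.
  by congr (_ + _); apply: eq_bigr => i _.
rewrite big_distrr /=; apply: eq_bigr => i _; rewrite add0n uphalf_half.
case: (odd i) => /=; last by rewrite !muln0.
by rewrite add1n expnS !mul1n mulnCA.
Qed.

Lemma Bs_fib n : Bs n.+1 = 2 ^ n * fib n.+1.
Proof.
have B0 : Bs 0 = 0 by rewrite /Bs big_ord1.
have A0 : As 0 = 1 by rewrite /As big_ord1.
have BSS m : Bs m.+2 = 2 * Bs m.+1 + 4 * Bs m.
  by rewrite BsS AsS BsS; ring.
elim/ltn_ind: n => -[|[|n]] IH.
- by rewrite BsS A0 B0.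
- by rewrite BsS AsS BsS A0 B0.
rewrite BSS !IH // (fibSS n.+1) !expnS. ring.
Qed.

Lemma sum_bin_prime r (f : nat -> nat) : prime r ->
  \sum_(i < r.+1) 'C(r, i) * f i = f 0 + f r %[mod r].
Proof.
move=> pr; have := prime_gt0 pr; case: r pr => // s pr _.
rewrite big_ord_recl big_ord_recr /= bin0 binn !mul1n.
set M := \sum_(i < s) _.
have dM : s.+1 %| M.
  apply: dvdn_sum => i _; apply: dvdn_mulr; apply: prime_dvd_bin => //.
  by rewrite /= /bump leq0n add1n ltnS ltn_ord.
by rewrite addnCA -modnDml (eqP dM) add0n.
Qed.

Import GRing.Theory.
Local Open Scope ring_scope.

Lemma Fp_eq p a b : prime p -> (a%:R : 'F_p) = b%:R <-> (a = b %[mod p])%N.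
Proof.
move=> pr; split=> [h|h].
  by have := congr1 (@nat_of_ord _) h; rewrite !(val_Fp_nat pr).
by rewrite -(Fp_nat_mod pr) h (Fp_nat_mod pr).
Qed.

Lemma Fp_eq0 p a : prime p -> (a%:R : 'F_p) = 0 <-> (p %| a)%N.
Proof.
move=> pr; rewrite (dvdn_pcharf (pchar_Fp pr)); split; [by move=> ->|by move/eqP].
Qed.

Lemma fermat p (x : 'F_p) : prime p -> x != 0 -> x ^+ p.-1 = 1.
Proof.
move=> pr nx; apply: (mulfI nx); rewrite mulr1 -exprS prednK ?prime_gt0 //.
by have := expf_card x; rewrite card_Fp.
Qed.

Lemma fib_mod_prime r : prime r -> (2 < r)%N ->
  (fib r)%:R = (5%:R ^+ r./2 : 'F_r) /\ 2 * (fib r.+1)%:R = 1 + (5%:R ^+ r./2 : 'F_r).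
Proof.
move=> pr r2.
have odr : odd r by case: (even_prime pr) r2 => [->|].
have n20 : (2%:R : 'F_r) != 0.
  apply/eqP => /(Fp_eq0 _ pr) /dvdn_leq; move=> /(_ isT); rewrite leqNgt r2.
  by [].
have hB : (Bs r)%:R = (5%:R ^+ r./2 : 'F_r).
  by rewrite -natrX; apply/(Fp_eq _ _ pr); rewrite /Bs (sum_bin_prime (fun i => odd i * 5 ^ i./2)%N pr) /= odr mul1n.
have hA : (As r)%:R = (1 : 'F_r).
  by apply/(Fp_eq _ 1 pr); rewrite /As (sum_bin_prime (fun i => ~~ odd i * 5 ^ i./2)%N pr) /= odr.
have rS : r = r.-1.+1 by rewrite prednK ?prime_gt0.
have h2 : (2%:R : 'F_r) ^+ r.-1 = 1 by apply: fermat.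
split.
  by rewrite -hB rS Bs_fib -rS natrM natrX h2 mul1r.
have := congr1 (fun x : nat => (x%:R : 'F_r)) (BsS r); rewrite /= natrD hA hB => <-.
by rewrite Bs_fib natrM natrX [X in _ ^+ X]rS exprS h2 mulr1.
Qed.

Lemma coprime_fib n : coprime (fib n) (fib n.+1).
Proof.
elim: n => [|n IH] //; rewrite /coprime fibSS gcdnDl.
by rewrite gcdnC.
Qed.

Lemma fib_shift (R : nzRingType) P (c : R) :
  (fib P)%:R = 0 :> R -> (fib P.+1)%:R = c -> forall m, (fib (m + P))%:R = c * (fib m)%:R.
Proof.
move=> h0 h1.
suff H : forall m, ((fib (m + P))%:R = c * (fib m)%:R :> R) /\
                   ((fib (m.+1 + P))%:R = c * (fib m.+1)%:R :> R) by move=> m; case: (H m).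
elim=> [|m [IH1 IH2]]; first by rewrite add0n add1n h0 h1 mulr0 mulr1.
split=> //; rewrite !addSn fibSS natrD -addSn IH2 IH1 -mulrDr.
by rewrite -natrD.
Qed.

Lemma period_Fp q P : prime q -> (0 < P)%N ->
  (forall m, (fib (m + P))%:R = (fib m)%:R :> 'F_q) -> is_fib_period_mod q P.
Proof. by move=> pr P0 h; split=> // m; apply/(Fp_eq _ _ pr). Qed.

Lemma pisano_dvd n pi P : is_pisano_period n pi -> is_fib_period_mod n P -> (pi %| P)%N.
Proof.
move=> [[pi0 hpi] minpi]; elim/ltn_ind: P => P IH hP.
have lePi := minpi _ hP.
case: (ltngtP pi P) lePi => // [ltP _|-> _]; last exact: dvdnn.
have hP' : is_fib_period_mod n (P - pi).
  split; first by rewrite subn_gt0.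
  move=> m; case: hP => _ hP.
  by rewrite -(hpi (m + (P - pi))%N) -addnA subnK ?(ltnW ltP) // hP.
have lt : (P - pi < P)%N by rewrite ltn_subrL pi0 (ltn_trans pi0 ltP).
by rewrite -(subnK (ltnW ltP)) (dvdn_addr _ (IH _ lt hP')) dvdnn.
Qed.

Lemma rank_dvd p z N : prime p -> is_rank_of_apparition p z -> (p %| fib N)%N -> (z %| N)%N.
Proof.
move=> pr [z0 [pz minz]] pN.
set c : 'F_p := (fib z.+1)%:R.
have cn0 : c != 0.
  apply/eqP => /(Fp_eq0 _ pr) pz1.
  have := coprime_fib z; rewrite /coprime => /eqP g1.
  have : (p %| gcdn (fib z) (fib z.+1))%N by rewrite dvdn_gcd pz pz1.
  by rewrite g1 dvdn1 => /eqP p1; move: (prime_gt1 pr); rewrite p1.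
have hsh := fib_shift (R := 'F_p) ((Fp_eq0 _ pr).2 pz) (erefl c).
have hk : forall k r, (fib (k * z + r))%:R = c ^+ k * (fib r)%:R :> 'F_p.
  elim=> [|k IH] r; first by rewrite mul0n add0n expr0 mul1r.
  by rewrite mulSn -addnA addnC hsh IH exprS mulrA.
have := (Fp_eq0 _ pr).2 pN; rewrite {1}(divn_eq N z) hk => /eqP.
rewrite mulf_eq0 expf_eq0 (negbTE cn0) andbF /= => /eqP /(Fp_eq0 _ pr) pr0.
case r0: (N %% z)%N => [|r]; first by rewrite /dvdn r0.
have : (0 < r.+1 < z)%N by apply/andP; split => //; rewrite -r0; exact: ltn_pmod.
by move=> /minz; rewrite -r0 pr0.
Qed.

Lemma five_neq0 r : prime r -> (5 < r)%N -> (5%:R : 'F_r) != 0.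
Proof.
move=> pr r5; apply/eqP => /(Fp_eq0 _ pr) /dvdn_leq h.
have := h isT; lia.
Qed.

Lemma two_neq0 r : prime r -> (2 < r)%N -> (2%:R : 'F_r) != 0.
Proof.
move=> pr r2; apply/eqP => /(Fp_eq0 _ pr) /dvdn_leq h.
have := h isT; lia.
Qed.

Lemma odd_half r : odd r -> (r./2 * 2 = r.-1)%N.
Proof. by move=> o; rewrite -{2}(odd_double_half r) o muln2. Qed.

Lemma e_sq r : prime r -> (5 < r)%N ->
  (5%:R ^+ r./2 : 'F_r) = 1 \/ (5%:R ^+ r./2 : 'F_r) = -1.
Proof.
move=> pr r5.
have odr : odd r by case: (even_prime pr) r5 => [->|].
have : ((5%:R ^+ r./2 : 'F_r) ^+ 2 == 1).
  by rewrite -exprM odd_half // fermat // five_neq0.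
by rewrite sqrf_eq1 => /orP [/eqP|/eqP]; [left|right].
Qed.

Lemma case_one r : prime r -> (5 < r)%N -> (5%:R ^+ r./2 : 'F_r) = 1 ->
  (fib r.-1)%:R = 0 :> 'F_r /\ (fib r)%:R = 1 :> 'F_r.
Proof.
move=> pr r5 e1.
have [h1 h2] := fib_mod_prime pr (ltn_trans (isT : (2 < 5)%N) r5).
rewrite e1 in h1 h2; split=> //.
have h3 : (fib r.+1)%:R = 1 :> 'F_r.
  apply: (mulfI (two_neq0 pr (ltn_trans (isT : (2 < 5)%N) r5))).
  by rewrite h2 mulr1.
move: h3; rewrite -(prednK (prime_gt0 pr)) fibSS natrD prednK ?prime_gt0 // h1.
by rewrite addrC => /(congr1 (fun x => x - 1)); rewrite addrK subrr.
Qed.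

Lemma case_m1 r : prime r -> (5 < r)%N -> (5%:R ^+ r./2 : 'F_r) = -1 ->
  (fib r.+1)%:R = 0 :> 'F_r /\ (fib r)%:R = -1 :> 'F_r.
Proof.
move=> pr r5 e1.
have [h1 h2] := fib_mod_prime pr (ltn_trans (isT : (2 < 5)%N) r5).
rewrite e1 addrN in h2; rewrite e1 in h1; split=> //.
move/eqP: h2; rewrite mulf_eq0 (negbTE (two_neq0 pr (ltn_trans (isT : (2 < 5)%N) r5))) /=.
by move/eqP.
Qed.

Theorem lemma6p3 (q zp piq : nat) :
  5 < q -> sophie_germain q ->
  is_rank_of_apparition (2 * q + 1) zp ->
  is_pisano_period q piq ->
  zp %| piq ->
  legendre 5 q = (-1)%R /\ piq %| 2 * (q + 1).
Proof.
move=> q5 [qP pP] rk pis zpi.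
set p := (2 * q + 1)%N in pP rk.
have p5 : (5 < p)%N by rewrite /p; lia.
have zdiv : (zp %| 2 * q \/ zp %| 2 * q + 2)%N.
  case: (e_sq pP p5) => e.
    have [h _] := case_one pP p5 e.
    left; apply: (rank_dvd pP rk); move/(Fp_eq0 _ pP): h.
    by have -> : (p.-1 = 2 * q)%N by rewrite /p addn1.
  have [h _] := case_m1 pP p5 e.
  right; apply: (rank_dvd pP rk); move/(Fp_eq0 _ pP): h.
  by have -> : (p.+1 = 2 * q + 2)%N by rewrite /p; lia.
case: (e_sq qP q5) => e.
  have [h0 h1] := case_one qP q5 e.
  have hsh := fib_shift h0 (_ : (fib q.-1.+1)%:R = 1 :> 'F_q).
  rewrite prednK ?prime_gt0 // in hsh.
  have per : is_fib_period_mod q q.-1.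
    apply: period_Fp => //; first by rewrite -subn1 subn_gt0 prime_gt1.
    by move=> m; rewrite (hsh h1) mul1r.
  have zq : (zp %| q.-1)%N := dvdn_trans zpi (pisano_dvd pis per).
  have z4 : (zp %| 4)%N.
    have z2 : (zp %| 2 * q.-1)%N by apply: dvdn_mull.
    case: zdiv => hz.
      have := dvdn_sub hz z2; have -> : (2 * q - 2 * q.-1 = 2)%N.
        by rewrite -subn1; lia.
      by move=> h2; apply: (dvdn_trans h2).
    have := dvdn_sub hz z2; have -> : (2 * q + 2 - 2 * q.-1 = 4)%N.
      by rewrite -subn1; have := prime_gt1 qP; lia.
    by [].
  case: rk => z0 [pz _].
  have zle : (zp <= 4)%N by apply: dvdn_leq.
  exfalso.
  have : (p %| 3)%N.
    move: z0 zle z4 pz; clear zq zpi zdiv; case: zp => [|[|[|[|[|zp]]]]] //= _ _ _.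
    - by rewrite dvdn1 => /eqP p1; move: p5; rewrite p1.
    - by rewrite dvdn1 => /eqP p1; move: p5; rewrite p1.
  by move/dvdn_leq => h; have := h isT; lia.
have [h0 h1] := case_m1 qP q5 e.
have h2 : (fib q.+2)%:R = -1 :> 'F_q by rewrite fibSS natrD h0 h1 add0r.
have hsh := fib_shift h0 h2.
split.
  rewrite /legendre.
  have -> : (q %| 5)%N = false.
    by apply/negbTE/negP => /dvdn_leq h; have := h isT; lia.
  have -> : [exists x : 'I_q, (x * x == 5 %[mod q])%N] = false.
    apply/negbTE/negP => /existsP [x /eqP hx].
    have hx' : (x%:R : 'F_q) ^+ 2 = 5%:R by rewrite -natrX; apply/(Fp_eq _ _ qP); rewrite expnS expn1.
    have x0 : (x%:R : 'F_q) != 0.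
      by apply: contraNneq (five_neq0 qP q5) => x0; rewrite -hx' x0 expr0n.
    have odq : odd q by case: (even_prime qP) q5 => [->|].
    move: e; rewrite -hx' -exprM mulnC odd_half // fermat // => h.
    have : (2%:R : 'F_q) = 0.
      by have -> : (2%:R : 'F_q) = 1 + 1 by []; rewrite {2}h subrr.
    by move/eqP; apply/negP; apply: two_neq0 => //; lia.
  by [].
apply: (pisano_dvd pis); apply: period_Fp => //; first by lia.
move=> m.
have -> : (m + 2 * (q + 1) = (m + q.+1) + q.+1)%N by lia.
by rewrite !hsh mulrA mulrNN mulr1 mul1r.
Qed.
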